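(* Let $P_0,P_1,P_2\in\mathbb H$ be three points not lying on a common geodesic, labelled so that $\chi:=\langle P_0\tilde\times P_1,P_2\rangle>0$, and let $\varepsilon\in\{-1,1\}$. For $i\in\mathbb Z/3\mathbb Z$ let $$R_i:=\frac{\sqrt{1-2\langle P_{i+1},P_{i+2}\rangle}\,(P_{i+1}+P_{i+2})+\varepsilon\, P_{i+1}\tilde\times P_{i+2}}{\sqrt3\,\bigl(1-\langle P_{i+1},P_{i+2}\rangle\bigr)}\in\mathbb H$$ (the centroid of the equilateral triangle $P_{i+1}P_{i+2}Q_i$ with $Q_i=\frac{-\langle P_{i+1},P_{i+2}\rangle(P_{i+1}+P_{i+2})+\varepsilon\sqrt{1-2\langle P_{i+1},P_{i+2}\rangle}\,P_{i+1}\tilde\times P_{i+2}}{1-\langle P_{i+1},P_{i+2}\rangle}$), so that $R_0R_1R_2$ is the Napoleonization of $P_0P_1P_2$. If the triangle $R_0R_1R_2$ is equilateral, i.e. $\langle R_0,R_1\rangle=\langle R_1,R_2\rangle=\langle R_2,R_0\rangle$, then $P_0P_1P_2$ is equilateral, i.e. $\langle P_0,P_1\rangle=\langle P_1,P_2\rangle=\langle P_2,P_0\rangle$.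
   Context: On $\mathbb R^3$ the Minkowski form is $\langle v,w\rangle=-v_1w_1+v_2w_2+v_3w_3$. The hyperbolic plane is the upper sheet $\mathbb H=\{P\in\mathbb R^3:\langle P,P\rangle=-1,\ P_1\ge 1\}$, with distance $\operatorname{arccosh}(-\langle P,Q\rangle)$. The hyperbolic cross product is $v\tilde\times w:=J(v\times w)$, where $\times$ is the Euclidean cross product and $J=\mathrm{diag}(-1,1,1)$. The centroid of a triangle with vertices $A,B,C\in\mathbb H$ is $(A+B+C)/\sqrt{-\langle A+B+C,A+B+C\rangle}$. A triangle $ABC$ in $\mathbb H$ is equilateral if $\langle A,B\rangle=\langle B,C\rangle=\langle C,A\rangle$. The sign $\varepsilon$ is used for all three sides (equilateral triangles all erected on the same side). *)

(* Defs.v *)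
From Stdlib Require Import Reals.
Open Scope R_scope.

Record vec3 := V3 { c1 : R; c2 : R; c3 : R }.

Definition vadd (v w : vec3) : vec3 := V3 (c1 v + c1 w) (c2 v + c2 w) (c3 v + c3 w).
Definition vscale (a : R) (v : vec3) : vec3 := V3 (a * c1 v) (a * c2 v) (a * c3 v).

Definition mink (v w : vec3) : R := - c1 v * c1 w + c2 v * c2 w + c3 v * c3 w.

Definition ecross (v w : vec3) : vec3 :=
  V3 (c2 v * c3 w - c3 v * c2 w) (c3 v * c1 w - c1 v * c3 w) (c1 v * c2 w - c2 v * c1 w).

Definition Jmap (v : vec3) : vec3 := V3 (- c1 v) (c2 v) (c3 v).

Definition hcross (v w : vec3) : vec3 := Jmap (ecross v w).

Definition in_H (P : vec3) : Prop := mink P P = -1 /\ 1 <= c1 P.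

(* three points of H lie on a common geodesic iff they lie in a common
   plane through the origin, i.e. are linearly dependent in R^3 *)
Definition on_common_geodesic (A B C : vec3) : Prop :=
  exists a b c : R, (a <> 0 \/ b <> 0 \/ c <> 0) /\
    vadd (vscale a A) (vadd (vscale b B) (vscale c C)) = V3 0 0 0.

Definition napR (eps : R) (A B : vec3) : vec3 :=
  vscale (/ (sqrt 3 * (1 - mink A B)))
    (vadd (vscale (sqrt (1 - 2 * mink A B)) (vadd A B)) (vscale eps (hcross A B))).

Definition equilateral (A B C : vec3) : Prop :=
  mink A B = mink B C /\ mink B C = mink C A.

(* Main.v *)
Require Import Defs.
From Stdlib Require Import Reals Lra Psatz.
Open Scope R_scope.
From Stdlib Require Import Lra Psatz.

Lemma pair_formula u v w e :
  mink (napR e u v) (napR e v w) =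
  / (sqrt 3 * (1 - mink u v)) * / (sqrt 3 * (1 - mink v w)) *
  (sqrt (1 - 2 * mink u v) * sqrt (1 - 2 * mink v w) * (mink u v + mink u w + mink v v + mink v w)
   + e * sqrt (1 - 2 * mink u v) * mink (hcross u v) w
   + e * sqrt (1 - 2 * mink v w) * mink (hcross u v) w
   - e * e * (mink u v * mink v w - mink u w * mink v v)).
Proof.
  unfold napR.
  set (k1 := (/ (sqrt 3 * (1 - mink u v)))).
  set (k2 := (/ (sqrt 3 * (1 - mink v w)))).
  set (s1 := sqrt (1 - 2 * mink u v)).
  set (s2 := sqrt (1 - 2 * mink v w)).
  set (ch := mink (hcross u v) w).
  clearbody k1 k2 s1 s2. subst ch.
  destruct u as [x0 y0 z0], v as [x1 y1 z1], w as [x2 y2 z2].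
  unfold mink, vscale, vadd, hcross, Jmap, ecross; simpl. ring.
Qed.

Lemma cyc u v w : mink (hcross u v) w = mink (hcross v w) u.
Proof. destruct u, v, w; unfold mink, hcross, Jmap, ecross; simpl; ring. Qed.

Lemma msym u v : mink u v = mink v u.
Proof. unfold mink; ring. Qed.

Lemma gram u v w : mink u u = -1 -> mink v v = -1 -> mink w w = -1 ->
  (mink (hcross u v) w)^2 = 1 - (mink v w)^2 - (mink w u)^2 - (mink u v)^2
     - 2 * mink v w * mink w u * mink u v.
Proof.
  destruct u as [x0 y0 z0], v as [x1 y1 z1], w as [x2 y2 z2].
  unfold mink, hcross, Jmap, ecross; simpl; intros H0 H1 H2.
  transitivity (- ((-x0*x0+y0*y0+z0*z0) * ((-x1*x1+y1*y1+z1*z1)*(-x2*x2+y2*y2+z2*z2) - (-x1*x2+y1*y2+z1*z2)^2)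
     - (-x0*x1+y0*y1+z0*z1) * ((-x0*x1+y0*y1+z0*z1)*(-x2*x2+y2*y2+z2*z2) - (-x1*x2+y1*y2+z1*z2)*(-x0*x2+y0*y2+z0*z2))
     + (-x0*x2+y0*y2+z0*z2) * ((-x0*x1+y0*y1+z0*z1)*(-x1*x2+y1*y2+z1*z2) - (-x1*x1+y1*y1+z1*z1)*(-x0*x2+y0*y2+z0*z2)))).
  ring. rewrite H0, H1, H2. ring.
Qed.

Lemma Hle P Q : in_H P -> in_H Q -> mink P Q <= -1.
Proof.
  destruct P as [x0 y0 z0], Q as [x1 y1 z1]; unfold in_H, mink; simpl.
  intros [H0 G0] [H1 G1].
  assert (E : (x0*x1)^2 - (1 + y0*y1+z0*z1)^2 = (y0-y1)^2 + (z0-z1)^2 + (y0*z1-z0*y1)^2).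
  { replace ((x0*x1)^2) with ((x0*x0)*(x1*x1)) by ring.
    replace (x0*x0) with (1+y0*y0+z0*z0) by lra.
    replace (x1*x1) with (1+y1*y1+z1*z1) by lra. ring. }
  assert (0 <= x0*x1) by nra.
  destruct (Rle_dec (1 + y0*y1+z0*z1) (x0*x1)). lra.
  exfalso. apply Rnot_le_lt in n.
  assert (0 < (1 + y0*y1+z0*z1 - x0*x1) * (1 + y0*y1+z0*z1 + x0*x1)) by (apply Rmult_lt_0_compat; lra).
  assert (0 <= (y0-y1)^2 + (z0-z1)^2 + (y0*z1-z0*y1)^2) by (repeat apply Rplus_le_le_0_compat; apply pow2_ge_0).
  lra.
Qed.

Lemma sq9 x : 0 <= x -> x * x >= 9 -> x >= 3.
Proof. intros. destruct (Rle_dec 3 x). lra. exfalso.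
  assert (x*x < 3*3). { apply Rle_lt_trans with (3*x). apply Rmult_le_compat_r; lra.
   apply Rmult_lt_compat_l; lra. } lra. Qed.

Lemma alg (ma mb mc ch e ua ub uc r3 : R) :
  0 <= ua -> 0 <= ub -> 0 <= uc ->
  ua * ua = 1 - 2 * ma -> ub * ub = 1 - 2 * mb -> uc * uc = 1 - 2 * mc ->
  ma <= -1 -> mb <= -1 -> mc <= -1 -> 0 < r3 -> (e = 1 \/ e = -1) ->
  ch ^ 2 = 1 - ma ^ 2 - mb ^ 2 - mc ^ 2 - 2 * ma * mb * mc ->
  / (r3 * (1 - ma)) * / (r3 * (1 - mb)) *
   (ua * ub * (ma + mc + -1 + mb) + e * ua * ch + e * ub * ch - e * e * (ma * mb - mc * -1)) =
  / (r3 * (1 - mb)) * / (r3 * (1 - mc)) *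
   (ub * uc * (mb + ma + -1 + mc) + e * ub * ch + e * uc * ch - e * e * (mb * mc - ma * -1)) ->
  / (r3 * (1 - mb)) * / (r3 * (1 - mc)) *
   (ub * uc * (mb + ma + -1 + mc) + e * ub * ch + e * uc * ch - e * e * (mb * mc - ma * -1)) =
  / (r3 * (1 - mc)) * / (r3 * (1 - ma)) *
   (uc * ua * (mc + mb + -1 + ma) + e * uc * ch + e * ua * ch - e * e * (mc * ma - mb * -1)) ->
  ma = mb /\ mb = mc.
Proof.
  intros Ha Hb Hc Ea Eb Ec La Lb Lc Hr He G H1 H2.
  set (Xab := ua * ub * (ma + mc + -1 + mb) + e * ua * ch + e * ub * ch - e * e * (ma * mb - mc * -1)) in *.
  set (Xbc := ub * uc * (mb + ma + -1 + mc) + e * ub * ch + e * uc * ch - e * e * (mb * mc - ma * -1)) in *.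
  set (Xca := uc * ua * (mc + mb + -1 + ma) + e * uc * ch + e * ua * ch - e * e * (mc * ma - mb * -1)) in *.
  assert (D1 : Xab * (1 - mc) - Xbc * (1 - ma) = 0).
  { transitivity ((/ (r3 * (1 - ma)) * / (r3 * (1 - mb)) * Xab - / (r3 * (1 - mb)) * / (r3 * (1 - mc)) * Xbc)
       * (r3 * r3 * (1 - ma) * (1 - mb) * (1 - mc))).
    field. repeat split; lra. rewrite H1. ring. }
  assert (D2 : Xbc * (1 - ma) - Xca * (1 - mb) = 0).
  { transitivity ((/ (r3 * (1 - mb)) * / (r3 * (1 - mc)) * Xbc - / (r3 * (1 - mc)) * / (r3 * (1 - ma)) * Xca)
       * (r3 * r3 * (1 - ma) * (1 - mb) * (1 - mc))).
    field. repeat split; lra. rewrite H2. ring. }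
  clear H1 H2.
  set (p := 1 - ma - mb - mc).
  set (X := ua*ub + ub*uc + uc*ua - 1).
  set (Y := ua*ub*uc - (ua + ub + uc)).
  set (T := - p * Y + e * ch * X).
  assert (I1 : Xab * (1 - mc) - Xbc * (1 - ma) = / 2 * (uc - ua) * T).
  { subst Xab Xbc T p X Y.
    assert (ma = (1 - ua*ua)/2) by lra. assert (mb = (1 - ub*ub)/2) by lra.
    assert (mc = (1 - uc*uc)/2) by lra. subst ma mb mc.
    destruct He; subst e; field. }
  assert (I2 : Xbc * (1 - ma) - Xca * (1 - mb) = / 2 * (ua - ub) * T).
  { subst Xca Xbc T p X Y.
    assert (ma = (1 - ua*ua)/2) by lra. assert (mb = (1 - ub*ub)/2) by lra.
    assert (mc = (1 - uc*uc)/2) by lra. subst ma mb mc.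
    destruct He; subst e; field. }
  assert (Heq : ua = ub /\ ub = uc).
  { destruct (Req_dec T 0) as [HT | HT].
    -
      assert (Q : 4 * (p^2 + ch^2) = X^2 + Y^2).
      { subst p X Y.
        assert (ma = (1 - ua*ua)/2) by lra. assert (mb = (1 - ub*ub)/2) by lra.
        assert (mc = (1 - uc*uc)/2) by lra. rewrite G. subst ma mb mc. field. }
      assert (Pp : 0 < p) by (subst p; lra).
      assert (ua*ua >= 3) by lra. assert (ub*ub >= 3) by lra. assert (uc*uc >= 3) by lra.
      assert (Px : 0 < X).
      { subst X. assert (ua*ub >= 3).
        { apply sq9; [apply Rmult_le_pos; lra|].
          replace (ua*ub*(ua*ub)) with ((ua*ua)*(ub*ub)) by ring.
          apply Rle_ge; apply Rle_trans with (3*3); [lra|]. apply Rmult_le_compat; lra. }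
        assert (0 <= ub*uc) by (apply Rmult_le_pos; lra).
        assert (0 <= uc*ua) by (apply Rmult_le_pos; lra). lra. }
      assert (HY : p * Y = e * ch * X) by (subst T; lra).
      assert (HY2 : p^2 * Y^2 = ch^2 * X^2).
      { replace (p^2*Y^2) with ((p*Y)^2) by ring. rewrite HY.
        destruct He; subst e; field. }
      assert (X2 : (4 * p^2 - X^2) * (p^2 + ch^2) = 0).
      { transitivity (p^2 * (4 * (p^2 + ch^2)) - X^2 * (p^2 + ch^2)). ring.
        rewrite Q. transitivity (p^2*Y^2 - ch^2*X^2). ring. rewrite HY2. ring. }
      apply Rmult_integral in X2. destruct X2 as [X2 | X2]; [| nra].
      assert (X = 2 * p) by nra.
      assert (S : (ua - ub)^2 + (ub - uc)^2 + (uc - ua)^2 = 0).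
      { transitivity (2 * (2*p - X)). subst p X.
        assert (ma = (1 - ua*ua)/2) by lra. assert (mb = (1 - ub*ub)/2) by lra.
        assert (mc = (1 - uc*uc)/2) by lra. subst ma mb mc. field. lra. }
      assert (0 <= (ua - ub)^2) by apply pow2_ge_0.
      assert (0 <= (ub - uc)^2) by apply pow2_ge_0.
      assert (0 <= (uc - ua)^2) by apply pow2_ge_0.
      split; nra.
    - assert (E1 : ua = ub).
      { assert (/ 2 * (ua - ub) * T = 0) by lra.
        apply Rmult_integral in H. destruct H; [|contradiction].
        apply Rmult_integral in H. destruct H; lra. }
      assert (E2 : uc = ua).
      { assert (/ 2 * (uc - ua) * T = 0) by lra.
        apply Rmult_integral in H. destruct H; [|contradiction].
        apply Rmult_integral in H. destruct H; lra. }
      split; lra. }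
  destruct Heq as [-> ->]. split; lra.
Qed.

Theorem theorem1p1 (P0 P1 P2 : vec3) (eps : R) :
  in_H P0 -> in_H P1 -> in_H P2 ->
  ~ on_common_geodesic P0 P1 P2 ->
  mink (hcross P0 P1) P2 > 0 ->
  (eps = 1 \/ eps = -1) ->
  equilateral (napR eps P1 P2) (napR eps P2 P0) (napR eps P0 P1) ->
  equilateral P0 P1 P2.
Proof.
  intros H0 H1 H2 _ _ He [E1 E2].
  unfold equilateral.
  revert E1 E2.
  rewrite !pair_formula.
  rewrite (msym P1 P0), (msym P2 P1), (msym P0 P2).
  rewrite <- (cyc P1 P2 P0), <- (cyc P0 P1 P2).
  rewrite (proj1 H0), (proj1 H1), (proj1 H2).
  intros E1 E2.
  pose proof (Hle _ _ H1 H2) as La.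
  pose proof (Hle _ _ H2 H0) as Lb.
  pose proof (Hle _ _ H0 H1) as Lc.
  destruct (alg (mink P1 P2) (mink P2 P0) (mink P0 P1) (mink (hcross P0 P1) P2) eps
     (sqrt (1 - 2 * mink P1 P2)) (sqrt (1 - 2 * mink P2 P0)) (sqrt (1 - 2 * mink P0 P1)) (sqrt 3)).
  all: try apply sqrt_pos.
  all: try (apply sqrt_sqrt; lra).
  all: try assumption.
  - apply sqrt_lt_R0; lra.
  - apply gram; first [apply H0 | apply H1 | apply H2].
  - split; lra.
Qed.
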